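(* Let $\widetilde{\Sigma}_1,\ldots,\widetilde{\Sigma}_n$ be pairwise disjoint visibly pushdown alphabets, $\widetilde{\Sigma}=\widetilde{\Sigma}_1\uplus\cdots\uplus\widetilde{\Sigma}_n$, and let $P_i\subseteq\widetilde{\Sigma}_i^*$ be well-matched visibly pushdown languages. Let $\mathcal{M}$ be a semantics on a state set $C$ in which every call and every return of each $\widetilde{\Sigma}_i$ belongs to $\widetilde{\Sigma}_i^{\mathsf{indep}}$. If every $P_i$ is tail-independent (or, respectively, every $P_i$ is head-independent), then for all $\mathsf{pre},\mathsf{post}\subseteq C$: $\{\mathsf{pre}\}\,P_1\bowtie\cdots\bowtie P_n\,\{\mathsf{post}\}$ implies $\{\mathsf{pre}\}\,P_1\parallel\cdots\parallel P_n\,\{\mathsf{post}\}$.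
   Context: A visibly pushdown (VP) alphabet is a finite alphabet partitioned into calls, returns and internals; $\widetilde{\Sigma}$ has as calls/returns/internals the unions. Calls and returns in a word are matched like opening and closing parentheses (internals ignored); a word is well-matched if all calls and returns are matched. Visibly pushdown languages are those accepted by pushdown automata that push on calls, pop on returns and leave the stack unchanged on internals. Shuffle: $P_1\parallel\cdots\parallel P_n=\{w\in\widetilde{\Sigma}^*:\Pi_{\widetilde{\Sigma}_i}(w)\in P_i\ \forall i\}$, $\Pi_{\widetilde{\Sigma}_i}$ erasing letters outside $\widetilde{\Sigma}_i$; a word is well-nested if every matched call–return pair consists of letters from the same $\widetilde{\Sigma}_k$; $P_1\bowtie\cdots\bowtie P_n$ is the set of well-nested words of the shuffle. A semantics is a map $\mathcal{M}$ from letters of $\widetilde{\Sigma}$ to binary relations on a set $C$ of states, extended to words by relational composition ($\mathcal{M}(\epsilon)$ is the identity, $\mathcal{M}(wa)$ is $\mathcal{M}(w)$ followed by $\mathcal{M}(a)$). For $\mathsf{pre},\mathsf{post}\subseteq C$ and a language $L$, $\{\mathsf{pre}\}L\{\mathsf{post}\}$ means: for all $\rho\in L$ and $(s,s')\in\mathcal{M}(\rho)$, $s\in\mathsf{pre}$ implies $s'\in\mathsf{post}$. Letters $a,b$ soundly commute if $\mathcal{M}(ab)=\mathcal{M}(ba)$. $\widetilde{\Sigma}_i^{\mathsf{indep}}$ is the set of letters of $\widetilde{\Sigma}_i$ that soundly commute with every letter of every $\widetilde{\Sigma}_j$, $j\ne i$. $P_i$ is tail-independent (resp. head-independent) if every $\rho\in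 P_i$ can be written $\rho=uv$, $u,v\in\widetilde{\Sigma}_i^*$, such that (1) all calls are in $u$ and all returns in $v$, except those at a position $j$ such that all letters between $j$ and its matching position are in $\widetilde{\Sigma}_i^{\mathsf{indep}}$; and (2) all letters of $v$ (resp. of $u$) are in $\widetilde{\Sigma}_i^{\mathsf{indep}}$. *)

(* Defs.v *)
From mathcomp Require Import all_boot.
Set Implicit Arguments. Unset Strict Implicit. Unset Printing Implicit Defensive.

Inductive lkind := LCall | LRet | LInt.

Section VP.
Variable T : Type.
Variable kind : T -> lkind.

Inductive wm : seq T -> Prop :=
| wm_nil : wm [::]
| wm_int a w : kind a = LInt -> wm w -> wm (a :: w)
| wm_nest c w1 r w2 : kind c = LCall -> kind r = LRet -> wm w1 -> wm w2 ->
    wm (c :: w1 ++ r :: w2).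

(* position j (a call) is matched with position k (a return) in w
   (positions numbered from 0) *)
Definition matched (w : seq T) (j k : nat) : Prop :=
  j < k /\
  (exists c, onth w j = Some c /\ kind c = LCall) /\
  (exists r, onth w k = Some r /\ kind r = LRet) /\
  wm (take (k - j.+1) (drop j.+1 w)).

Definition well_matched (w : seq T) : Prop :=
  forall j a, onth w j = Some a ->
    (kind a = LCall -> exists k, matched w j k) /\
    (kind a = LRet -> exists k, matched w k j).

(* Visibly pushdown automata (returns on the empty stack allowed, reading
   the bottom symbol None); acceptance by final state. *)
Record vpa := VPA {
  vQ : finType; vG : finType;
  vinit : pred vQ; vfin : pred vQ;
  vcall : vQ -> T -> vQ -> vG -> bool;
  vret : vQ -> T -> option vG -> vQ -> bool;
  vint : vQ -> T -> vQ -> bool }.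

Definition vstep (A : vpa) (c : vQ A * seq (vG A)) (a : T)
    (c' : vQ A * seq (vG A)) : Prop :=
  match kind a with
  | LCall => exists g, vcall c.1 a c'.1 g /\ c'.2 = g :: c.2
  | LRet => (exists g st0, c.2 = g :: st0 /\ c'.2 = st0 /\ vret c.1 a (Some g) c'.1)
            \/ (c.2 = [::] /\ c'.2 = [::] /\ vret c.1 a None c'.1)
  | LInt => vint c.1 a c'.1 /\ c'.2 = c.2
  end.

Fixpoint vrun (A : vpa) (c : vQ A * seq (vG A)) (w : seq T)
    (c' : vQ A * seq (vG A)) : Prop :=
  match w with
  | [::] => c = c'
  | a :: w' => exists c1, vstep c a c1 /\ vrun c1 w' c'
  end.

Definition vaccepts (A : vpa) (w : seq T) : Prop :=
  exists (q0 qf : vQ A) (st : seq (vG A)), vinit q0 /\ vfin qf /\ @vrun A (q0, [::]) w (qf, st).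

Definition is_VPL (L : seq T -> Prop) : Prop :=
  exists A : vpa, forall w, L w <-> vaccepts A w.

Section Sem.
Variable C : Type.
Variable M : T -> C -> C -> Prop.

Fixpoint semw (w : seq T) : C -> C -> Prop :=
  match w with
  | [::] => fun s s' => s = s'
  | a :: w' => fun s s' => exists t, M a s t /\ semw w' t s'
  end.

Definition hoare (pre : C -> Prop) (L : seq T -> Prop) (post : C -> Prop) :=
  forall rho, L rho -> forall s s', semw rho s s' -> pre s -> post s'.

Definition sound_commute (a b : T) : Prop :=
  forall s s', semw [:: a; b] s s' <-> semw [:: b; a] s s'.

Variable n : nat.
Variable comp : T -> 'I_n.  (* the alphabet Sigma_i a letter belongs to *)

Definition proj (i : 'I_n) (w : seq T) : seq T := [seq a <- w | comp a == i].

Definition indep (i : 'I_n) (a : T) : Prop :=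
  comp a = i /\ forall b, comp b <> i -> sound_commute a b.

Definition shuffle (P : 'I_n -> seq T -> Prop) (w : seq T) : Prop :=
  forall i, P i (proj i w).

Definition well_nested (w : seq T) : Prop :=
  forall j k a b, matched w j k -> onth w j = Some a -> onth w k = Some b ->
    comp a = comp b.

Definition bowtie (P : 'I_n -> seq T -> Prop) (w : seq T) : Prop :=
  shuffle P w /\ well_nested w.

Definition indep_span (i : 'I_n) (rho : seq T) (j : nat) : Prop :=
  exists k, (matched rho j k \/ matched rho k j) /\
    forall l a, minn j k < l < maxn j k -> onth rho l = Some a -> indep i a.

Definition split_cond (i : 'I_n) (rho u : seq T) : Prop :=
  forall j a, onth rho j = Some a ->
    ((kind a = LCall /\ size u <= j) \/ (kind a = LRet /\ j < size u)) ->
    indep_span i rho j.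

Definition tail_indep (i : 'I_n) (L : seq T -> Prop) : Prop :=
  forall rho, L rho -> exists u v, rho = u ++ v /\ split_cond i rho u /\
    (forall l a, onth v l = Some a -> indep i a).

Definition head_indep (i : 'I_n) (L : seq T -> Prop) : Prop :=
  forall rho, L rho -> exists u v, rho = u ++ v /\ split_cond i rho u /\
    (forall l a, onth u l = Some a -> indep i a).

End Sem.
End VP.

(* Main.v *)
Require Import Defs.
From mathcomp Require Import all_boot zify.
From Stdlib Require Import ClassicalEpsilon.
Set Implicit Arguments. Unset Strict Implicit. Unset Printing Implicit Defensive.


Lemma onth_split (T : Type) (w : seq T) j a :
  onth w j = Some a <-> exists p q, w = p ++ a :: q /\ size p = j.
Proof.
elim: w j => [|b w IH] j.
  split; first by case: j.
  by case=> [[|c p]] [q [//]].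
case: j => [|j] /=.
  split; first by case=> <-; exists [::], w.
  case=> [[|c p]] [q [H1 H2]] //=.
  by case: H1 => ->.
split.
  by move/IH=> [p [q [-> <-]]]; exists (b :: p), q.
case=> [[|c p]] [q [H1 H2]] //=.
by apply/IH; case: H1 H2 => _ -> [<-]; exists p, q.
Qed.

Section Comb.
Variable T : finType.
Variable kind : T -> lkind.

Fixpoint nd (k : nat) (w : seq T) : bool :=
  match w with
  | [::] => true
  | a :: w' => match kind a with
               | LCall => nd k.+1 w'
               | LRet => (k != 0) && nd k.-1 w'
               | LInt => nd k w' end end.

Fixpoint ht (k : nat) (w : seq T) : nat :=
  match w with
  | [::] => k
  | a :: w' => match kind a with
               | LCall => ht k.+1 w'
               | LRet => ht k.-1 w'
               | LInt => ht k w' end end.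

Definition Dyck m := forall k, nd k m /\ ht k m = k.

Lemma nd_cat k x y : nd k (x ++ y) = nd k x && nd (ht k x) y.
Proof.
elim: x k => [|a x IH] k //=; case: (kind a) => //; by rewrite IH ?andbA.
Qed.

Lemma ht_cat k x y : ht k (x ++ y) = ht (ht k x) y.
Proof. by elim: x k => [|a x IH] k //=; case: (kind a). Qed.

Lemma ht_shift j k p : nd j p -> ht (k + j) p = k + ht j p.
Proof.
elim: p j => [|a p IH] j //=; case: (kind a) => //.
- by move=> h; rewrite -addnS IH.
- by case: j => [|j] //= h; rewrite -IH // addnS.
- exact: IH.
Qed.

Lemma wm_Dyck m : wm kind m -> Dyck m.
Proof.
elim=> [|a w ha _ IH|c w1 r w2 hc hr _ IH1 _ IH2] k /=; first by [].
- by rewrite ha; apply: IH.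
- rewrite hc nd_cat ht_cat /=; case: (IH1 k.+1) => [-> ->] /=; rewrite hr /=.
  exact: IH2.
Qed.

Lemma first_viol j x : ~~ nd j x -> exists b1 r b2, x = b1 ++ r :: b2 /\
  nd j b1 /\ ht j b1 = 0 /\ kind r = LRet.
Proof.
elim: x j => [|a x IH] j //=; case E: (kind a) => /=.
- by move/IH=> [b1 [r [b2 [-> [h1 [h2 h3]]]]]]; exists (a :: b1), r, b2; rewrite /= E.
- case: j => [|j] /=.
  + by move=> _; exists [::], a, x.
  + by move/IH=> [b1 [r [b2 [-> [h1 [h2 h3]]]]]]; exists (a :: b1), r, b2; rewrite /= E.
- by move/IH=> [b1 [r [b2 [-> [h1 [h2 h3]]]]]]; exists (a :: b1), r, b2; rewrite /= E.
Qed.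

Lemma nd_rcons k x a : nd k (rcons x a) = nd k x &&
  (if kind a is LRet then ht k x != 0 else true).
Proof. rewrite -cats1 nd_cat /=; by case: (kind a); rewrite ?andbT. Qed.

Lemma ht_rcons k x a : ht k (rcons x a) =
  match kind a with LCall => (ht k x).+1 | LRet => (ht k x).-1 | LInt => ht k x end.
Proof. by rewrite -cats1 ht_cat /=; case: (kind a). Qed.

Lemma last_rise h x : h < ht 0 x -> exists x1 c x2, x = x1 ++ c :: x2 /\
  kind c = LCall /\ nd 0 x2 /\ h <= ht 0 x2.
Proof.
elim/last_ind: x h => [|y a IH] h /=; first by [].
rewrite ht_rcons; case E: (kind a) => H.
- case: h H => [|h] H.
  + by exists y, a, [::]; rewrite cats1.
  + have [x1 [c [x2 [-> [hc [h1 h2]]]]]] := IH h H.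
    exists x1, c, (rcons x2 a); rewrite rcons_cat /= nd_rcons ht_rcons E h1.
    by split.
- have : h.+1 < ht 0 y by case: (ht 0 y) H => [|[]].
  move/IH=> [x1 [c [x2 [-> [hc [h1 h2]]]]]].
  exists x1, c, (rcons x2 a); rewrite rcons_cat /= nd_rcons ht_rcons E h1 /=.
  by split=> //; split; [case: (ht 0 x2) h2|case: (ht 0 x2) h2].
- have [x1 [c [x2 [-> [hc [h1 h2]]]]]] := IH h H.
  by exists x1, c, (rcons x2 a); rewrite rcons_cat /= nd_rcons ht_rcons E h1.
Qed.

Lemma split_dip k x j : nd (j + k.+1) x -> ht (j + k.+1) x < k.+1 ->
  exists m r t, x = m ++ r :: t /\ nd j m /\ ht j m = 0 /\ kind r = LRet /\
    nd k t /\ ht k t = ht (j + k.+1) x.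
Proof.
elim: x j => [|a x IH] j /=; first by rewrite ltnNge leq_addl.
case E: (kind a).
- move=> h1 h2; have [m [r [t [-> H]]]] := IH j.+1 h1 h2.
  by exists (a :: m), r, t; rewrite /= E.
- case: j => [|j] /=; rewrite ?add0n /=.
  + by move=> h1 h2; exists [::], a, x.
  + move=> h1 h2; have [m [r [t [-> H]]]] := IH j h1 h2.
    by exists (a :: m), r, t; rewrite /= E.
- move=> h1 h2; have [m [r [t [-> H]]]] := IH j h1 h2.
  by exists (a :: m), r, t; rewrite /= E.
Qed.

End Comb.

Section Core.
Variable T : finType.
Variable kind : T -> lkind.
Variable n : nat.
Variable comp : T -> 'I_n.
Variable d : pred T.
Hypothesis d_int : forall a, d a -> kind a = LInt.

Fixpoint SN (s : seq 'I_n) (w : seq T) : bool :=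
  match w with
  | [::] => true
  | a :: w' => match kind a with
               | LCall => SN (comp a :: s) w'
               | LRet => match s with [::] => SN [::] w'
                         | j :: s' => (comp a == j) && SN s' w' end
               | LInt => SN s w' end end.

Lemma SN_count i p k s rest : all (fun a => comp a == i) p -> nd kind k p ->
  SN (nseq (ht kind k p) i ++ s) rest -> SN (nseq k i ++ s) (p ++ rest).
Proof.
elim: p k => [|a p IH] k //=; move=> /andP[/eqP ci hp]; case: (kind a).
- by move=> h1 h2; rewrite ci; apply: (IH k.+1).
- by case: k => [|k] //= h1 h2; rewrite ci eqxx /=; apply: IH.
- by move=> h1 h2; apply: IH.
Qed.

Definition projn (i : 'I_n) (w : seq T) := [seq a <- w | comp a == i].

Lemma projn_cat i x y : projn i (x ++ y) = projn i x ++ projn i y.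
Proof. exact: filter_cat. Qed.

Lemma projn_cons i a x : projn i (a :: x) = if comp a == i then a :: projn i x else projn i x.
Proof. by []. Qed.

Definition upd (r : 'I_n -> seq T) i q := fun j => if j == i then q else r j.

Inductive good : seq T -> Prop :=
| good_free r : all (predC d) r -> good r
| good_step p x q : all (predC d) p -> d x -> nd kind 0 p -> good q ->
    good (p ++ x :: q).

Lemma projn_comp i p : all (fun a => comp a == i) p -> forall j,
  projn j p = if i == j then p else [::].
Proof.
move=> h j; rewrite /projn; case: eqP => [<-|ne].
  by apply/all_filterP.
apply/eqP; rewrite -[_ == _]negbK -has_filter; apply/hasP => -[a ap /eqP ca].
by move/allP: h => /(_ a ap) /eqP; rewrite ca => /esym.
Qed.

Lemma merge_lemma s (rho : 'I_n -> seq T) :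
  (forall i, all (fun a => comp a == i) (rho i)) ->
  (forall i, all (predC d) (rho i)) ->
  (forall i, nd kind (count_mem i s) (rho i) /\ ht kind (count_mem i s) (rho i) = 0) ->
  exists w', (forall i, projn i w' = rho i) /\ filter d w' = [::] /\ SN s w'.
Proof.
elim: s rho => [|i s IH] rho hc hd hb.
- exists (flatten [seq rho j | j <- enum 'I_n]).
  have key : forall l : seq 'I_n, uniq l -> [/\ forall i, projn i (flatten [seq rho j | j <- l]) =
       (if i \in l then rho i else [::]), filter d (flatten [seq rho j | j <- l]) = [::]
       & SN [::] (flatten [seq rho j | j <- l])].
    elim=> [|j l IHl] /=; first by [].
    case/andP=> jl ul; have [h1 h2 h3] := IHl ul; split.
    + move=> i; rewrite projn_cat h1 (projn_comp (hc j)) in_cons.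
      case: eqP => [<-|ne]; first by rewrite eqxx (negbTE jl) cats0.
      by move/eqP: ne; rewrite eq_sym => /negbTE ->.
    + rewrite filter_cat h2 cats0; apply/eqP; rewrite -[_ == _]negbK -has_filter.
      by rewrite -all_predC hd.
    + have [n1 n2] := hb j; rewrite /= in n1 n2.
      by rewrite -[[::]]/(nseq 0 j ++ [::]); apply: (SN_count (hc j) n1); rewrite n2.
  have [h1 h2 h3] := key _ (enum_uniq 'I_n); split=> //.
  by move=> i; rewrite h1 mem_enum.
- have [n1 n2] := hb i; rewrite /= eqxx /= in n1 n2.
  rewrite add1n -[(count_mem i s).+1]add0n in n1 n2.
  have hlt : ht kind (0 + (count_mem i s).+1) (rho i) < (count_mem i s).+1 by rewrite n2.
  have [m [r [t [rdef [m1 [m2 [m3 [t1 t2]]]]]]]] := split_dip n1 hlt.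
  have [w'' [p1 [p2 p3]]] : exists w', (forall j, projn j w' = upd rho i t j) /\ filter d w' = [::] /\ SN s w'.
    apply: IH.
  + move=> j; rewrite /upd; case: (j =P i) => [->|_]; last exact: hc.
    by have := hc i; rewrite rdef all_cat => /andP[_ /andP[]].
  + move=> j; rewrite /upd; case: (j =P i) => [_|_]; last exact: hd.
    by have := hd i; rewrite rdef all_cat => /andP[_ /andP[]].
  + move=> j; rewrite /upd; case: (j =P i) => [->|ne]; first by rewrite t2 n2.
    by have := hb j; rewrite /= (eq_sym i); move/eqP/negbTE: ne => ->.
  exists (m ++ r :: w''); have hci := hc i; rewrite rdef all_cat /= in hci.
  case/and3P: hci => cm /eqP cr _.
  split; [|split].
  + move=> j; rewrite projn_cat projn_cons p1 (projn_comp cm) /upd cr.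
    case: (i =P j) => [<-|ne]; first by rewrite eqxx rdef.
    by case: (j =P i) => // e; case: ne.
  + have hdi := hd i; rewrite rdef all_cat /= in hdi; case/and3P: hdi => dm dr _.
    rewrite filter_cat /= (negbTE dr) p2 cats0; apply/eqP.
    by rewrite -[_ == _]negbK -has_filter -all_predC dm.
  + rewrite -[i :: s]/(nseq 0 i ++ i :: s); apply: (SN_count cm m1).
    by rewrite m2 /= m3 cr eqxx.
Qed.


Lemma good_inv r : good r -> all (predC d) r \/ exists p x q, r = p ++ x :: q /\
  all (predC d) p /\ d x /\ nd kind 0 p /\ good q.
Proof. by case=> [r0 h|p x q h1 h2 h3 h4]; [left|right; exists p, x, q]. Qed.

Lemma core_lemma D s (rho : 'I_n -> seq T) :
  (forall i, all (fun a => comp a == i) (rho i)) ->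
  all d D -> (forall i, projn i D = filter d (rho i)) ->
  (forall i, good (rho i)) ->
  (forall i, nd kind (count_mem i s) (rho i) /\ ht kind (count_mem i s) (rho i) = 0) ->
  exists w', (forall i, projn i w' = rho i) /\ filter d w' = D /\ SN s w'.
Proof.
elim: D s rho => [|x D IH] s rho hc hD hp hg hb.
  apply: merge_lemma => // i; rewrite all_predC has_filter -hp.
  by rewrite /projn.
set i := comp x.
have hx : filter d (rho i) = x :: projn i D by rewrite -hp /= /i eqxx.
have [hr|[p [y [q [hrho [pd [dy [p0 gq]]]]]]]] := good_inv (hg i).
  by move: hr; rewrite all_predC has_filter => /negP; case; rewrite hx.
move: hx; rewrite hrho filter_cat /= dy.
have -> : filter d p = [::].
  by apply/eqP; rewrite -[_ == _]negbK -has_filter -all_predC pd.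
case=> <- fq.
have hci := hc i; rewrite hrho all_cat /= in hci; case/and3P: hci => cp /eqP cy cq.
have [nb hb0] := hb i; rewrite hrho nd_cat ht_cat in nb hb0.
case/andP: nb => np nq; rewrite /= (d_int dy) in nq hb0.
have hsh : ht kind (count_mem i s) p = ht kind 0 p + count_mem i s.
  by rewrite -[count_mem i s]addn0 ht_shift // addn0 addnC.
have [w'' [p1 [p2 p3]]] : exists w', (forall j, projn j w' = upd rho i q j) /\
    filter d w' = D /\ SN (nseq (ht kind 0 p) i ++ s) w'.
  apply: IH.
  + move=> j; rewrite /upd; case: (j =P i) => [->|_]; last exact: hc.
    exact: cq.
  + by case/andP: hD.
  + move=> j; rewrite /upd; case: (j =P i) => [->|ne].
      by rewrite fq.
    by rewrite -hp /= /i; case: (comp x =P j) => // e; case: ne.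
  + by move=> j; rewrite /upd; case: (j =P i) => [_|_].
  + move=> j; rewrite /upd count_cat count_nseq /=; case: (j =P i) => [->|ne].
      by rewrite eqxx mul1n -hsh.
    have -> : (i == j) = false by apply/eqP => e; case: ne.
    by rewrite mul0n add0n; apply: hb.
exists (p ++ y :: w''); split; [|split].
- move=> j; rewrite projn_cat projn_cons p1 (projn_comp cp) /upd cy.
  case: (i =P j) => [<-|ne]; first by rewrite eqxx hrho.
  by case: (j =P i) => // e; case: ne.
- rewrite filter_cat /= dy p2.
  have -> : filter d p = [::].
    by apply/eqP; rewrite -[_ == _]negbK -has_filter -all_predC pd.
  by [].
- rewrite -[s]/(nseq 0 i ++ s); apply: (SN_count cp p0).
  by rewrite /= (d_int dy).
Qed.

End Core.

Lemma cat_eq_size (T : eqType) (x1 y1 x2 y2 : seq T) :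
  x1 ++ y1 = x2 ++ y2 -> size x1 = size x2 -> x1 = x2 /\ y1 = y2.
Proof. by move=> /eqP h s; move: h; rewrite eqseq_cat // => /andP[/eqP -> /eqP ->]. Qed.

Lemma drop_cat_le (T : Type) (x p y : seq T) : size x <= size p ->
  drop (size x) (p ++ y) = drop (size x) p ++ y.
Proof.
rewrite drop_cat; case: ltnP => // h1 h2.
have e : size x = size p by apply/eqP; rewrite eqn_leq h1 h2.
by rewrite e subnn drop0 drop_oversize ?e.
Qed.

Definition swapk (k : lkind) := match k with LCall => LRet | LRet => LCall | LInt => LInt end.

Section Rev.
Variable T : finType.
Variable kind : T -> lkind.
Let kind' := fun a => swapk (kind a).

Lemma matched_split w j k : matched kind w j k -> exists p c m r q,
  w = p ++ c :: m ++ r :: q /\ size p = j /\ size m = k - j.+1 /\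
  kind c = LCall /\ kind r = LRet /\ wm kind m.
Proof.
case=> jk [[c [oc kc]] [[r [or kr]] hwm]].
have [p [q0 [wd sp]]] := (onth_split w j c).1 oc.
have dq : drop j.+1 w = q0.
  by rewrite wd -cat_rcons drop_size_cat // size_rcons sp.
have oq : onth q0 (k - j.+1) = Some r.
  by move: or; rewrite wd onth_cat sp ltnNge (ltnW jk) /= -subnSK.
have [m [q [qd sm]]] := (onth_split q0 _ r).1 oq.
exists p, c, m, r, q; do !split => //; first by rewrite wd qd.
by move: hwm; rewrite dq qd -sm take_size_cat.
Qed.

Lemma SN_cat n (comp : T -> 'I_n) knd s x y : SN knd comp s (x ++ y) -> exists s', SN knd comp s' y.
Proof.
elim: x s => [|a x IH] s /=; first by exists s.
case: (knd a); first by apply: IH.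
- by case: s => [|i s]; [apply: IH|case/andP=> _; apply: IH].
- by apply: IH.
Qed.

Lemma SN_wm n (comp : T -> 'I_n) m : wm kind m -> forall s y, SN kind comp s (m ++ y) -> SN kind comp s y.
Proof.
elim=> [|a w ha _ IH|c w1 r w2 hc hr _ IH1 _ IH2] s y //=.
- by rewrite ha; apply: IH.
- rewrite hc -catA => /IH1 /=; rewrite hr => /andP[_]; exact: IH2.
Qed.

Lemma SN_wm_rev n (comp : T -> 'I_n) m : wm kind m -> forall s y, SN kind' comp s (rev m ++ y) -> SN kind' comp s y.
Proof.
elim=> [|a w ha _ IH|c w1 r w2 hc hr _ IH1 _ IH2] s y //=.
- by rewrite rev_cons -cats1 -catA /= => /IH /=; rewrite /kind' ha.
- rewrite rev_cons rev_cat rev_cons -!cats1 -!catA /= => /IH2 /=.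
  rewrite {1}/kind' hr /= => /IH1 /=; rewrite /kind' hc /=.
  by case: s => [|i s] //= /andP[].
Qed.

Lemma wn_aux n (comp : T -> 'I_n) w :
  (forall p c m r q, w = p ++ c :: m ++ r :: q -> kind c = LCall -> kind r = LRet ->
     wm kind m -> comp c = comp r) -> well_nested kind comp w.
Proof.
move=> H j k a b /[dup] hm /matched_split [p [c [m [r [q [wd [sp [sm [kc [kr hw]]]]]]]]]].
move=> oa ob.
have jk : j < k by case: hm.
have : onth w j = Some c by apply/onth_split; exists p, (m ++ r :: q).
rewrite oa => -[->].
have : onth w k = Some r.
  apply/onth_split; exists (p ++ c :: m), q; rewrite wd -catA; split => //.
  by rewrite size_cat /= sp sm subnSK // subnKC // ltnW.
rewrite ob => -[->]; exact: H wd kc kr hw.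
Qed.

Lemma SN_wn n (comp : T -> 'I_n) w : SN kind comp [::] w -> well_nested kind comp w.
Proof.
move=> h; apply: wn_aux => p c m r q wd kc kr hw.
move: h; rewrite wd => /SN_cat [s' /=]; rewrite kc => /(SN_wm hw) /=.
by rewrite kr => /andP[/eqP].
Qed.

Lemma SN_wn_rev n (comp : T -> 'I_n) w : SN kind' comp [::] (rev w) -> well_nested kind comp w.
Proof.
move=> h; apply: wn_aux => p c m r q wd kc kr hw.
move: h; rewrite wd.
have -> : rev (p ++ c :: m ++ r :: q) = rev q ++ r :: (rev m ++ c :: rev p).
  by rewrite !(rev_cat, rev_cons) -!cats1 -!catA.
move=> /SN_cat [s' /=]; rewrite /kind' kr /= => /(SN_wm_rev hw) /=.
by rewrite /kind' kc /= => /andP[/eqP].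
Qed.

Lemma nd_rev k h x : nd kind k x -> ht kind k x = h ->
  nd kind' h (rev x) /\ ht kind' h (rev x) = k.
Proof.
elim: x k => [|a x IH] k /=; first by move=> _ ->.
rewrite rev_cons nd_rcons ht_rcons /kind'.
case E: (kind a) => /=.
- by move=> h1 h2; have [-> ->] := IH _ h1 h2.
- by case: k => [|k] //= h1 h2; have [-> ->] := IH _ h1 h2.
- by move=> h1 h2; have [-> ->] := IH _ h1 h2.
Qed.

Lemma Dyck_rev m : Dyck kind m -> Dyck kind' (rev m).
Proof. by move=> D k; have [h1 h2] := D k; apply: nd_rev. Qed.

Lemma wmatched_nd w : well_matched kind w -> nd kind 0 w /\ ht kind 0 w = 0.
Proof.
move=> wmw.
have ndw : nd kind 0 w.
  case E: (nd kind 0 w) => //.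
  have [b1 [r [b2 [wd [n1 [h1 kr]]]]]] := first_viol (negbT E).
  have or : onth w (size b1) = Some r by apply/onth_split; exists b1, b2.
  have [_ /(_ kr) [k /[dup] hm /matched_split [p [c [m [r' [q [wd' [sp [sm [kc [kr' hw]]]]]]]]]]]] := wmw _ _ or.
  have kj : k < size b1 by case: hm.
  have [eb _] : b1 = p ++ c :: m /\ r :: b2 = r' :: q.
    apply: cat_eq_size; first by rewrite -wd -catA -wd'.
    by rewrite size_cat /= sm sp subnSK // subnKC // ltnW.
  by move: h1; rewrite eb ht_cat /=; rewrite kc; have [_ ->] := wm_Dyck hw (ht kind 0 p).+1.
split=> //.
case: (posnP (ht kind 0 w)) => // hp.
have [x1 [c [x2 [wd [kc [n2 _]]]]]] := last_rise hp.
have oc : onth w (size x1) = Some c by apply/onth_split; exists x1, x2.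
have [/(_ kc) [k /matched_split [p [c' [m [r [q [wd' [sp [sm [kc' [kr hw]]]]]]]]]]] _] := wmw _ _ oc.
have [_ e2] := cat_eq_size (etrans (esym wd') wd) sp.
case: e2 => _ e2; move: n2; rewrite -e2 nd_cat; have [-> ->] := wm_Dyck hw 0.
by rewrite /= kr.
Qed.

End Rev.

Section Good.
Variable T : finType.
Variable kind : T -> lkind.
Variable d : pred T.
Hypothesis hcr : forall a, kind a <> LInt -> ~~ d a.

Definition HT (rho : seq T) := forall Y r Z, rho = Y ++ r :: Z -> kind r = LRet ->
  has d Z -> exists p c m, Y = p ++ c :: m /\ kind c = LCall /\ Dyck kind m /\
  all (predC d) m.

Lemma split_first q : has d q -> exists p x q', q = p ++ x :: q' /\ all (predC d) p /\ d x.
Proof.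
elim: q => [|a q IH] //=; case E: (d a) => /=.
  by move=> _; exists [::], a, q.
by move/IH=> [p [x [q' [-> [h1 h2]]]]]; exists (a :: p), x, q'; rewrite /= E.
Qed.

Lemma good_of_HT rho : HT rho -> good kind d rho.
Proof.
move=> H.
suff: forall N q a, size q < N -> rho = a ++ q ->
    (a = [::] \/ exists a' e, a = rcons a' e /\ d e) -> good kind d q.
  by move/(_ (size rho).+1 rho [::]); apply => //; left.
elim=> [|N IH] q a //= sq ra ha.
case hq: (has d q); last by apply: good_free; rewrite all_predC hq.
have [p [x [q' [qd [pd dx]]]]] := split_first hq.
rewrite qd; apply: good_step => //.
- case E: (nd kind 0 p) => //.
  have [b1 [r [b2 [pd' [n1 [h1 kr]]]]]] := first_viol (negbT E).
  have [p0 [c [m0 [ed [kc [Dm dm]]]]]] : exists p c m, a ++ b1 = p ++ c :: m /\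
      kind c = LCall /\ Dyck kind m /\ all (predC d) m.
    apply: (H _ r (b2 ++ x :: q')) => //.
      by rewrite ra qd pd' -!catA.
    by rewrite has_cat /= dx orbT.
  case: (leqP (size a) (size p0)) => hs.
    have : b1 = drop (size a) p0 ++ c :: m0.
      by rewrite -drop_cat_le // -ed drop_size_cat.
    move=> eb; move: h1; rewrite eb ht_cat /= kc.
    by have [_ ->] := Dm (ht kind 0 (drop (size a) p0)).+1.
  have ea : a = p0 ++ c :: take (size a - (size p0).+1) m0.
    have e1 := f_equal (take (size a)) ed; rewrite take_size_cat // in e1; rewrite {1}e1.
    by rewrite take_cat ltnNge (ltnW hs) /= -(subnSK hs).
  case: ha => [a0|[a' [e [ae de]]]]; first by move: hs; rewrite a0.
  have : e \in c :: take (size a - (size p0).+1) m0.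
    have le : last e a = e by rewrite ae last_rcons.
    have := mem_last c (take (size a - (size p0).+1) m0).
    by rewrite -[last c _]/(last (last e p0) (c :: _)) -last_cat -ea le.
  rewrite in_cons => /orP[/eqP ec|em].
    have hh : kind c <> LInt by rewrite kc.
    by have := hcr hh; rewrite -ec de.
  by move/allP: dm => /(_ e (mem_take em)); rewrite /= de.
- apply: (IH _ (rcons (a ++ p) x)).
  + by move: sq; rewrite qd size_cat /=; lia.
  + by rewrite ra qd -cats1 -!catA.
  + by right; exists (a ++ p), x.
Qed.

End Good.

Lemma HH_to_HT (T : finType) (kind : T -> lkind) (d : pred T) r :
  (forall Y c Z, r = Y ++ c :: Z -> kind c = LCall -> has d Y ->
     exists m x q, Z = m ++ x :: q /\ kind x = LRet /\ Dyck kind m /\ all (predC d) m) ->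
  HT (fun a => swapk (kind a)) d (rev r).
Proof.
move=> H Y x Z rd kx hZ.
have rr : r = rev Z ++ x :: rev Y.
  by rewrite -[r]revK rd rev_cat rev_cons cat_rcons.
have kx' : kind x = LCall by move: kx; case: (kind x).
have hZ' : has d (rev Z) by rewrite has_rev.
have [m [x' [q [ed [kx2 [Dm dm]]]]]] := H _ _ _ rr kx' hZ'.
exists (rev q), x', (rev m); split.
  by rewrite -[Y]revK ed rev_cat rev_cons cat_rcons.
by split; [rewrite kx2|split; [apply: Dyck_rev|rewrite all_rev]].
Qed.

Section Main.
Variable T : finType.
Variable kind : T -> lkind.
Variable n : nat.
Variable comp : T -> 'I_n.
Variable C : Type.
Variable M : T -> C -> C -> Prop.

Definition dep (a : T) : bool :=
  if excluded_middle_informative (indep M comp (comp a) a) then false else true.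

Lemma dep_indep a : ~~ dep a -> indep M comp (comp a) a.
Proof. by rewrite /dep; case: excluded_middle_informative. Qed.

Lemma indep_dep i a : indep M comp i a -> ~~ dep a.
Proof.
move=> h; rewrite /dep; case: excluded_middle_informative => // nh.
by case: nh; case: h => ci h'; rewrite ci; split.
Qed.

Lemma HT_tail i r u v : r = u ++ v -> split_cond kind M comp i r u ->
  (forall l a, onth v l = Some a -> indep M comp i a) -> HT kind dep r.
Proof.
move=> ruv hsc hv Y x Z rd kx hZ.
have jy : size Y < size u.
  rewrite ltnNge; apply/negP => hle.
  have ev : v = drop (size u) Y ++ x :: Z.
    by rewrite -drop_cat_le // -rd ruv drop_size_cat.
  case/hasP: hZ => y yZ dy.
  have : y \in v by rewrite ev mem_cat in_cons yZ !orbT.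
  case/onthP => l ol; have := indep_dep (hv _ _ ol); by rewrite dy.
have ox : onth r (size Y) = Some x by apply/onth_split; exists Y, Z.
have [k [hm hbet]] := hsc _ _ ox (or_intror (conj kx jy)).
case: hm => hm.
  case: hm => _ [[c [oc kc]] _]; move: oc; rewrite ox => -[ec].
  by move: kc; rewrite -ec kx.
have hk : k < size Y by case: hm.
have [p [c [m [r' [q [rd' [sp [sm [kc [kr hw]]]]]]]]]] := matched_split hm.
have [eY _] : Y = p ++ c :: m /\ x :: Z = r' :: q.
  apply: cat_eq_size; first by rewrite -rd -catA -rd'.
  by rewrite size_cat /= sm sp; lia.
exists p, c, m; split=> //; split=> //; split; first exact: wm_Dyck.
apply/allP => e em; case/splitPr: em sm rd' => m1 m2 sm rd'.
have hl : minn (size Y) k < k + (size m1).+1 < maxn (size Y) k.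
  by move: sm; rewrite size_cat /=; lia.
have oe : onth r (k + (size m1).+1) = Some e.
  apply/onth_split; exists (p ++ c :: m1), (m2 ++ r' :: q).
  by rewrite rd' -!catA /= size_cat /= sp.
by have := indep_dep (hbet _ _ hl oe).
Qed.

Lemma HH_head i r u v : r = u ++ v -> split_cond kind M comp i r u ->
  (forall l a, onth u l = Some a -> indep M comp i a) ->
  forall Y c Z, r = Y ++ c :: Z -> kind c = LCall -> has dep Y ->
     exists m x q, Z = m ++ x :: q /\ kind x = LRet /\ Dyck kind m /\ all (predC dep) m.
Proof.
move=> ruv hsc hu Y c Z rd kc hY.
have jy : size u <= size Y.
  rewrite leqNgt; apply/negP => hlt.
  have eu : take (size Y) u = Y.
    have := f_equal (take (size Y)) (etrans (esym ruv) rd).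
    by rewrite take_cat hlt take_size_cat.
  case/hasP: hY => y yY dy.
  have : y \in u by rewrite -eu in yY; apply: mem_take yY.
  case/onthP => l ol; have := indep_dep (hu _ _ ol); by rewrite dy.
have oc : onth r (size Y) = Some c by apply/onth_split; exists Y, Z.
have [k [hm hbet]] := hsc _ _ oc (or_introl (conj kc jy)).
case: hm => hm; last first.
  case: hm => _ [_ [[x [ox kx]] _]]; move: ox; rewrite oc => -[ec].
  by move: kx; rewrite -ec kc.
have hk : size Y < k by case: hm.
have [p [c' [m [x [q [rd' [sp [sm [kc' [kx hw]]]]]]]]]] := matched_split hm.
have [eY eZ] := cat_eq_size (etrans (esym rd) rd') (esym sp).
case: eZ => ec eZ.
exists m, x, q; split=> //; split=> //; split; first exact: wm_Dyck.
apply/allP => e em; case/splitPr: em sm rd' => m1 m2 sm rd'.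
have hl : minn (size Y) k < size Y + (size m1).+1 < maxn (size Y) k.
  by move: sm; rewrite size_cat /=; lia.
have oe : onth r (size Y + (size m1).+1) = Some e.
  apply/onth_split; exists (p ++ c' :: m1), (m2 ++ x :: q).
  by rewrite rd' -!catA /= size_cat /= sp.
by have := indep_dep (hbet _ _ hl oe).
Qed.

Lemma semw_cat x y s s' : semw M (x ++ y) s s' <-> exists t, semw M x s t /\ semw M y t s'.
Proof.
elim: x s => [|a x IH] s /=.
  by split; [move=> h; exists s|case=> t [-> h]].
split.
  by case=> t [h1 /IH [t' [h2 h3]]]; exists t'; split=> //; exists t.
by case=> t [[t1 [h1 h2]] h3]; exists t1; split=> //; apply/IH; exists t.
Qed.

Lemma comm_move x a y s s' : (forall e, e \in x -> sound_commute M e a) ->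
  semw M (x ++ a :: y) s s' -> semw M (a :: x ++ y) s s'.
Proof.
elim: x s => [|e x IH] s //= hx [t [h1 h2]].
have [t2 [h3 h4]] := IH t (fun e' he' => hx e' (mem_behead (s := e :: x) he')) h2.
have : semw M [:: e; a] s t2 by exists t; split=> //; exists t2.
case/(hx e (mem_head _ _)) => t3 [h5 [t4 [h6 /= e4]]]; subst t4.
by exists t3; split=> //; exists t2.
Qed.

Lemma sc_sym a b : sound_commute M a b -> sound_commute M b a.
Proof. by move=> h s s'; split => /h. Qed.

Lemma trace w' : forall w, (forall i, proj comp i w = proj comp i w') ->
  filter dep w = filter dep w' -> forall s s', semw M w s s' -> semw M w' s s'.
Proof.
elim: w' => [|a w' IH] w hp hf s s'.
  case: w hp hf => [|b w] // hp _; have := hp (comp b); by rewrite /proj /= eqxx.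
set i := comp a.
have hpi := hp i; rewrite /proj /= eqxx -/(proj comp i w') in hpi.
have hw : has (fun e => comp e == i) w by rewrite has_filter hpi.
have [x [b [y [wd [xi bi]]]]] := split_first hw.
have px : proj comp i x = [::].
  by apply/eqP; rewrite -[_ == _]negbK -has_filter -all_predC.
move: hpi; rewrite wd /proj filter_cat -/(proj comp i x) px /= bi => -[eb py].
subst b.
have hxi : forall e, e \in x -> comp e != i by move=> e ex; move/allP: xi => /(_ e ex).
have hx : forall e, e \in x -> sound_commute M e a.
  move=> e ex; case da: (dep a).
  - move: hf; rewrite wd filter_cat /= da.
    case fx: (filter dep x) => [|e0 x0] //.
      have : e \notin filter dep x by rewrite fx.
      rewrite mem_filter ex andbT => /dep_indep [_ h] _; apply: h.
      by move/eqP: (hxi e ex); apply: contra_not => <-.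
    have : e0 \in filter dep x by rewrite fx mem_head.
    rewrite mem_filter => /andP[_ /hxi] ne [e0a].
    by move: ne; rewrite e0a eqxx.
  - have [_ h] := dep_indep (negbT da); apply: sc_sym; apply: h.
    by move=> ec; move/eqP: (hxi e ex); apply.
move=> /(comm_move hx) [t [h1 h2]]; exists t; split=> //.
apply: (IH (x ++ y)) => //.
- move=> j; case: (j =P i) => [->|ne].
    by rewrite /proj filter_cat -/(proj comp i x) px.
  have := hp j; rewrite wd /proj !filter_cat /=.
  have -> : (comp a == j) = false by apply/eqP => e; apply: ne; rewrite -e.
  by [].
- move: hf; rewrite wd !filter_cat /=; case da: (dep a) => //.
  case fx: (filter dep x) => [|e0 x0] /=; first by case.
  have : e0 \in filter dep x by rewrite fx mem_head.
  rewrite mem_filter => /andP[_ e0x] [e0a].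
  by move: (hxi _ e0x); rewrite e0a eqxx.
Qed.

End Main.
Unset Implicit Arguments.

Theorem theorem5p3 (T : finType) (kind : T -> lkind) (n : nat)
  (comp : T -> 'I_n) (P : 'I_n -> seq T -> Prop) (C : Type)
  (M : T -> C -> C -> Prop) :
  (forall i w, P i w -> all (fun a => comp a == i) w) ->
  (forall i, is_VPL kind (P i)) ->
  (forall i w, P i w -> well_matched kind w) ->
  (forall a, kind a <> LInt -> indep M comp (comp a) a) ->
  ((forall i, tail_indep kind M comp i (P i)) \/
   (forall i, head_indep kind M comp i (P i))) ->
  forall pre post : C -> Prop,
    hoare M pre (bowtie kind comp P) post ->
    hoare M pre (shuffle comp P) post.
Proof.
move=> _ _ hwm hcr hcase pre post H rho hsh s s' hsem hpre.
set d := dep comp M.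
set r := fun i => proj comp i rho.
set D := filter d rho.
have hcr' : forall a, kind a <> LInt -> ~~ d a.
  by move=> a /hcr /indep_dep.
have dint : forall a, d a -> kind a = LInt.
  by move=> a da; case E: (kind a) => //; have := hcr' a; rewrite E da => /(_ (fun h => match h with end)).
have hc : forall i, all (fun a => comp a == i) (r i) by move=> i; apply: filter_all.
have hp : forall i, projn comp i D = filter d (r i).
  by move=> i; rewrite /projn /D /r /proj -!filter_predI; apply: eq_filter => a /=; rewrite andbC.
have hb : forall i, nd kind 0 (r i) /\ ht kind 0 (r i) = 0.
  by move=> i; apply: wmatched_nd; apply: (hwm i); apply: hsh.
case: hcase => hind.
- have hg : forall i, good kind d (r i).
    move=> i; have [u [v [ruv [hsc hv]]]] := hind i _ (hsh i).
    apply: good_of_HT => //; exact: HT_tail ruv hsc hv.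
  have [w' [p1 [p2 p3]]] := core_lemma (s := [::]) dint hc (filter_all d rho) hp hg hb.
  have hpw : forall i, proj comp i rho = proj comp i w'.
    by move=> i; rewrite -[proj comp i w']/(projn comp i w') p1.
  have hfw : filter d rho = filter d w' by rewrite p2.
  apply: (H w'); last exact: hpre; last exact: (trace hpw hfw hsem).
  split; last exact: SN_wn p3.
  by move=> i; rewrite -[proj _ _ _]/(projn comp i w') p1; apply: hsh.
- have hcr2 : forall a, swapk (kind a) <> LInt -> ~~ d a.
    by move=> a; case E: (kind a) => //= _; apply: hcr'; rewrite E.
  have dint2 : forall a, d a -> swapk (kind a) = LInt by move=> a /dint ->.
  have hg : forall i, good (fun a => swapk (kind a)) d (rev (r i)).
    move=> i; have [u [v [ruv [hsc hu]]]] := hind i _ (hsh i).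
    apply: good_of_HT => //; apply: HH_to_HT; exact: HH_head ruv hsc hu.
  have hc2 : forall i, all (fun a => comp a == i) (rev (r i)) by move=> i; rewrite all_rev.
  have hD2 : all d (rev D) by rewrite all_rev filter_all.
  have hp2 : forall i, projn comp i (rev D) = filter d (rev (r i)).
    by move=> i; rewrite /projn !filter_rev; congr rev; apply: hp.
  have hb2 : forall i, nd (fun a => swapk (kind a)) (count_mem i [::]) (rev (r i)) /\
       ht (fun a => swapk (kind a)) (count_mem i [::]) (rev (r i)) = 0.
    by move=> i; have [h1 h2] := hb i; apply: nd_rev.
  have [w' [p1 [p2 p3]]] := core_lemma dint2 hc2 hD2 hp2 hg hb2.
  have hpw : forall i, proj comp i rho = proj comp i (rev w').
    move=> i; have e := p1 i; rewrite /projn in e.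
    by rewrite {2}/proj filter_rev e revK.
  have hfw : filter d rho = filter d (rev w') by rewrite filter_rev p2 revK.
  apply: (H (rev w')); last exact: hpre; last exact: (trace hpw hfw hsem).
  split; last by apply: SN_wn_rev; rewrite revK.
  by move=> i; rewrite -hpw; apply: hsh.
Qed.
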